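(* For every digraph $G$, the cubical set $N_\infty G$ is a Kan complex.
   Context: A digraph $G$ is a vertex set with a set of arrows $E(G)\subseteq V(G)^2$ containing the diagonal; digraph maps preserve arrows. Box product $G\otimes H$: vertices $V(G)\times V(H)$, arrow $(g,h)\to(g',h')$ iff ($g\to g'$, $h=h'$) or ($g=g'$, $h\to h'$). $I_n$: vertices $\{0,\dots,n\}$, non-degenerate arrows $2i\to 2i+1$ and $2j+2\to 2j+1$; $I_n^{\mathrm{op}}$ the reversed digraph; write $I_n^{+1}=I_n$, $I_n^{-1}=I_n^{\mathrm{op}}$. For an interval $J$ with vertices $\{0,\dots,k\}$, $N_JG$ is the cubical set with connections with $n$-cubes $\mathrm{Hom}(J^{\otimes n},G)$, faces inserting coordinate $0$ or $k$, degeneracies deleting a coordinate, connections taking max/min of adjacent coordinates; $N_m=N_{I_m}$, $N_m^{\mathrm{op}}=N_{I_m^{\mathrm{op}}}$. Maps $r:I^\varepsilon_{n+1}\to I^\varepsilon_n$, $r(x)=\min(x,n)$, and $l:I^{-\varepsilon}_{n+1}\to I^\varepsilon_n$, $l(x)=\max(x-1,0)$, are digraph maps. $N_\infty G$ is the colimit of $N_1G\xrightarrow{r^*}N_2G\xrightarrow{l^*}N_3^{\mathrm{op}}G\xrightarrow{r^*}N_4^{\mathrm{op}}G\xrightarrow{l^*}N_5G\xrightarrow{r^*}\cdots$. A Kan complex is a cubical set with fillers for all open box inclusions $\sqcap^n_{i,\varepsilon}\hookrightarrow\Box^n$. *)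

(* Defs.v *)
From mathcomp Require Import all_boot.
Set Implicit Arguments.
Unset Strict Implicit.
Unset Printing Implicit Defensive.

Record digraph := Digraph {
  vert :> Type;
  arr : vert -> vert -> Prop;
  arr_refl : forall x, arr x x
}.

Definition Iarr (a b : nat) : Prop :=
  a = b \/ (~~ odd a /\ b = a.+1) \/ (~~ odd a /\ 0 < a /\ b = a.-1).

(* sign true = I_m (= I_m^{+1}), sign false = I_m^op (= I_m^{-1}). *)
Definition Iarr_s (s : bool) (a b : nat) : Prop :=
  if s then Iarr a b else Iarr b a.

(* ---- The sequence N_1 -> N_2 -> N_3^op -> N_4^op -> N_5 -> ... ----
   Stage p (p = 0,1,2,...) is the nerve N_J with J = I_{p+1}^{sign p},
   sign p = + iff ((p+1)-1)/2 = p/2 is even. *)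
Definition stage_sign (p : nat) : bool := ~~ odd p./2.

(* The digraph map J_{p+1} -> J_p inducing the transition N_{J_p} -> N_{J_{p+1}}:
   for m = p+1 odd it is r(x) = min(x, m), for m even it is l(x) = max(x-1,0). *)
Definition tr (p : nat) (x : nat) : nat :=
  if ~~ odd p then minn x p.+1 else x.-1.

Fixpoint TT (p d : nat) : nat -> nat :=
  match d with
  | 0 => id
  | d'.+1 => fun x => TT p d' (tr (p + d') x)
  end.

Definition is_vertex (k n : nat) (v : seq nat) : bool :=
  (size v == n) && all (fun a => a <= k) v.

Definition box_arr (s : bool) (n : nat) (v w : seq nat) : Prop :=
  v = w \/ exists j, j < n /\ (forall i, i != j -> nth 0 v i = nth 0 w i)
                     /\ Iarr_s s (nth 0 v j) (nth 0 w j).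

(* x is an n-cube of N_{I_{p+1}^{sign p}} G, i.e. a digraph map
   (I_{p+1}^{sign p})^{(x) n} -> G (only its values on vertices matter). *)
Definition is_cube (G : digraph) (p n : nat) (x : seq nat -> G) : Prop :=
  forall v w, is_vertex p.+1 n v -> is_vertex p.+1 n w ->
    box_arr (stage_sign p) n v w -> arr (x v) (x w).

(* A representative of an element of N_oo G: a stage and a cube at that stage. *)
Record rep (G : digraph) := Rep { rstage : nat; rmap : seq nat -> G }.

Definition valid (G : digraph) (n : nat) (c : rep G) : Prop :=
  is_cube (rstage c) n (rmap c).

(* Two representatives of n-cubes define the same n-cube of the sequential
   colimit iff they become equal at some common later stage. *)
Definition ceq (G : digraph) (n : nat) (c c' : rep G) : Prop :=
  exists s, rstage c <= s /\ rstage c' <= s /\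
    forall v, is_vertex s.+1 n v ->
      rmap c (map (TT (rstage c) (s - rstage c)) v)
      = rmap c' (map (TT (rstage c') (s - rstage c')) v).

Definition ins (i e : nat) (v : seq nat) : seq nat := take i v ++ e :: drop i v.

Definition face (G : digraph) (i : nat) (eps : bool) (c : rep G) : rep G :=
  Rep (rstage c) (fun v => rmap c (ins i (if eps then (rstage c).+1 else 0) v)).

(* Kan condition for N_oo G: every open box (i,eps) in dimension n+1, i.e. a
   family of n-cubes b j eta for (j,eta) <> (i,eps) that agree on common
   (n-1)-faces, has a filler. *)
Definition Ninfty_Kan (G : digraph) : Prop :=
  forall (n i : nat) (eps : bool) (b : nat -> bool -> rep G),
    i < n.+1 ->
    (forall j eta, j < n.+1 -> (j, eta) <> (i, eps) -> valid n (b j eta)) ->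
    (forall j j' eta eta', j < j' -> j' < n.+1 ->
       (j, eta) <> (i, eps) -> (j', eta') <> (i, eps) ->
       ceq n.-1 (face j eta (b j' eta')) (face j'.-1 eta' (b j eta))) ->
    exists c : rep G, valid n.+1 c /\
      forall j eta, j < n.+1 -> (j, eta) <> (i, eps) ->
        ceq n (face j eta c) (b j eta).

(* Main.v *)
Require Import Defs.
From mathcomp Require Import all_boot.
From mathcomp Require Import zify.
Set Implicit Arguments.
Unset Strict Implicit.
Unset Printing Implicit Defensive.

Lemma Iarr_sP s x y :
  Iarr_s s x y <-> x = y \/ ((y = x.+1 \/ x = y.+1) /\ odd x = ~~ s).
Proof. rewrite /Iarr_s /Iarr; case: s => /=; split; lia. Qed.

Fixpoint A (p d : nat) : nat :=
  match d with 0 => 0 | d'.+1 => A p d' + odd (p + d') end.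

Lemma A_le p d : A p d <= d.
Proof. elim: d => //= d IH; lia. Qed.

Lemma TT_closed p d x : x <= p + d + 1 -> TT p d x = minn (x - A p d) p.+1.
Proof.
elim: d x => [|d IH] x Hx /=; first lia.
have Hd := A_le p d.
rewrite /tr; case: ifP => h; rewrite IH; lia.
Qed.

Lemma A_par p d : odd ((p + d)./2 + A p d) = odd p./2.
Proof.
elim: d => [|d IH]; first by rewrite !addn0.
move: IH; rewrite /= addnS -!divn2; lia.
Qed.

Lemma A_even p m : odd p -> A p (m + m) = m.
Proof.
move=> Hp; elim: m => [|m IH] //.
rewrite addSn addnS /= IH; lia.
Qed.

Lemma TT_comp r d1 d2 x : TT r (d1 + d2) x = TT r d1 (TT (r + d1) d2 x).
Proof.
elim: d2 x => [|d2 IH] x /=; first by rewrite addn0.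
by rewrite addnS /= IH addnA.
Qed.

Lemma TT0 r d : TT r d 0 = 0.
Proof. by rewrite TT_closed //; lia. Qed.

Lemma TTtop r d : TT r d (r + d).+1 = r.+1.
Proof. have := A_le r d; rewrite TT_closed; lia. Qed.

Lemma TT_le r d x : x <= r + d + 1 -> TT r d x <= r.+1.
Proof. move=> h; rewrite TT_closed //; lia. Qed.

Definition del (k : nat) (w : seq nat) := take k w ++ drop k.+1 w.

Lemma size_ins i e v : size (ins i e v) = (size v).+1.
Proof. by rewrite /ins size_cat /= addnS -size_cat cat_take_drop. Qed.

Lemma nth_ins i e v k : i <= size v ->
  nth 0 (ins i e v) k = if k < i then nth 0 v k else if k == i then e else nth 0 v k.-1.
Proof.
move=> hi; rewrite /ins nth_cat size_takel //.
case: ltnP => hk; first by rewrite nth_take.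
case: eqP => [->|hne]; first by rewrite subnn.
have -> : k - i = (k - i - 1).+1 by lia.
by rewrite /= nth_drop; congr nth; lia.
Qed.

Lemma size_del k w : k < size w -> size (del k w) = (size w).-1.
Proof. move=> h; rewrite /del size_cat size_take size_drop h; lia. Qed.

Lemma nth_del k w m : k < size w ->
  nth 0 (del k w) m = if m < k then nth 0 w m else nth 0 w m.+1.
Proof.
move=> h; rewrite /del nth_cat size_take h.
case: ltnP => hm; first by rewrite nth_take.
by rewrite nth_drop; congr nth; lia.
Qed.

Lemma map_ins f i e v : map f (ins i e v) = ins i (f e) (map f v).
Proof. by rewrite /ins map_cat map_take /= map_drop. Qed.

Lemma is_vertexP k n v : is_vertex k n v <-> size v = n /\ forall j, nth 0 v j <= k.
Proof.
rewrite /is_vertex; split.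
- move/andP=> [/eqP Hs /allP Ha]; split=> // j.
  case: (ltnP j (size v)) => h; first by apply: Ha; apply: mem_nth.
  by rewrite nth_default.
- move=> [Hs Ha]; apply/andP; split; first by apply/eqP.
  by apply/(all_nthP 0) => j _; apply: Ha.
Qed.

Lemma seq_eqP (v w : seq nat) : size v = size w -> (forall k, nth 0 v k = nth 0 w k) -> v = w.
Proof. move=> hs h; apply: (eq_from_nth (x0:=0)) => // k _; apply: h. Qed.
Definition Edge k (v w : seq nat) :=
  size v = size w /\ (forall l, l != k -> nth 0 v l = nth 0 w l) /\
  (nth 0 w k = (nth 0 v k).+1 \/ nth 0 v k = (nth 0 w k).+1).

Definition Good (o : nat) (f : seq nat -> nat) :=
  forall k v w, Edge k v w -> f v = f w \/
    ((f w = (f v).+1 \/ f v = (f w).+1) /\ odd (f v) = odd (nth 0 v k + o)).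

Lemma Good_const o c : Good o (fun _ => c).
Proof. by move=> k v w _; left. Qed.

Lemma Good_proj k0 : Good 0 (fun v => nth 0 v k0).
Proof.
move=> k v w [_ [Ho Hk]]; case: (eqVneq k0 k) => [->|h].
- right; split; [lia| by rewrite addn0].
- by left; apply: Ho.
Qed.

Lemma Good_min o f g : Good o f -> Good o g -> Good o (fun v => minn (f v) (g v)).
Proof.
move=> Hf Hg k v w E; have := Hf k v w E; have := Hg k v w E.
move: (nth 0 v k + o) => x; lia.
Qed.

Lemma Good_max o f g : Good o f -> Good o g -> Good o (fun v => maxn (f v) (g v)).
Proof.
move=> Hf Hg k v w E; have := Hf k v w E; have := Hg k v w E.
move: (nth 0 v k + o) => x; lia.
Qed.

Lemma Good_subc o c f : Good o f -> Good (o + c) (fun v => f v - c).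
Proof.
move=> Hf k v w E; have := Hf k v w E; rewrite addnA.
move: (nth 0 v k + o) => x; lia.
Qed.

Lemma Good_csub o c f : Good o f -> Good (o + c) (fun v => c - f v).
Proof.
move=> Hf k v w E; have := Hf k v w E; rewrite addnA.
move: (nth 0 v k + o) => x; lia.
Qed.

Lemma Good_par o o' f : odd o = odd o' -> Good o f -> Good o' f.
Proof.
move=> ho Hf k v w E; have := Hf k v w E.
move: (nth 0 v k) => x; lia.
Qed.

Lemma Good_fold o (g : nat -> seq nat -> nat) c ks :
  (forall k, Good o (g k)) -> Good o (fun v => foldr (fun k acc => minn (g k v) acc) c ks).
Proof.
move=> Hg; elim: ks => [|k ks IH] /=; first exact: Good_const.
exact: (Good_min (Hg k) IH).
Qed.
Section Filler.
Variables (n i : nat) (eps : bool) (p m : nat).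
Hypothesis Hp : odd p.
Hypothesis Hm : p < m.
Hypothesis Hi : i < n.+1.

Definition Cq := p.+1 + (m + m).
Definition Tm (x : nat) := minn (x - m) p.+1.
Definition Dm (x : nat) := minn x (Cq - x).
Definition ks := [seq k <- iota 0 n.+1 | k != i].
Definition delta (v : seq nat) := foldr (fun k acc => minn (Dm (nth 0 v k)) acc) Cq ks.
Definition sfun (v : seq nat) :=
  if eps then minn (Tm (nth 0 v i)) (m - delta v)
  else maxn (Tm (nth 0 v i)) (p.+1 - (m - delta v)).
Definition Fm (v : seq nat) :=
  mkseq (fun k => if k == i then sfun v else Tm (nth 0 v k)) n.+1.

Lemma nth_Fm v l : nth 0 (Fm v) l =
  if l < n.+1 then (if l == i then sfun v else Tm (nth 0 v l)) else 0.
Proof.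
rewrite /Fm; case: ltnP => h; first by rewrite nth_mkseq.
by rewrite nth_default // size_mkseq.
Qed.

Lemma size_Fm v : size (Fm v) = n.+1.
Proof. by rewrite size_mkseq. Qed.

Lemma Good_T k : Good m (fun v => Tm (nth 0 v k)).
Proof.
rewrite /Tm; apply: Good_min; last exact: Good_const.
exact: (Good_subc m (Good_proj k)).
Qed.

Lemma Good_D k : Good 0 (fun v => Dm (nth 0 v k)).
Proof.
rewrite /Dm; apply: Good_min; first exact: Good_proj.
apply: (Good_par _ (Good_csub Cq (Good_proj k))).
rewrite /Cq; lia.
Qed.

Lemma Good_delta : Good 0 delta.
Proof. apply: Good_fold => k; exact: Good_D. Qed.

Lemma Good_s : Good m sfun.
Proof.
have H1 : Good m (fun v => m - delta v) by exact: (Good_csub m Good_delta).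
rewrite /sfun; case: eps.
- exact: (Good_min (Good_T i) H1).
- apply: (Good_max (Good_T i)).
  apply: (Good_par _ (Good_csub p.+1 H1)); lia.
Qed.

Lemma delta_le v k : k \in ks -> delta v <= Dm (nth 0 v k).
Proof.
rewrite /delta; elim: ks => [|k' l IH] //=; rewrite inE.
case/orP=> [/eqP ->|h]; first lia.
have := IH h; lia.
Qed.

Lemma delta_lt v : delta v < m -> exists2 k, k \in ks & Dm (nth 0 v k) < m.
Proof.
rewrite /delta; elim: ks => [|k l IH] /=; first by rewrite /Cq; lia.
case: (ltnP (Dm (nth 0 v k)) m) => h1 h2.
- by exists k => //; rewrite inE eqxx.
- have [k' hk' hk] : exists2 k', k' \in l & Dm (nth 0 v k') < m by apply: IH; lia.
  by exists k' => //; rewrite inE hk' orbT.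
Qed.

Lemma delta_stable j v w : Edge j v w -> m <= Dm (nth 0 v j) -> m <= Dm (nth 0 w j) ->
  m - delta v = m - delta w.
Proof.
move=> [_ [Ho _]] h1 h2; rewrite /delta; elim: ks => [|k l IH] //=.
case: (eqVneq k j) => [->|hk]; first lia.
rewrite (Ho _ hk); lia.
Qed.

Lemma Tm_le x : Tm x <= p.+1.
Proof. rewrite /Tm; lia. Qed.

Lemma sfun_le v : sfun v <= p.+1.
Proof. rewrite /sfun; case: eps; have := Tm_le (nth 0 v i); lia. Qed.

Lemma Fm_vertex v : is_vertex p.+1 n.+1 (Fm v).
Proof.
apply/is_vertexP; split; first exact: size_Fm.
move=> l; rewrite nth_Fm; case: ifP => // _; case: ifP => _; [exact: sfun_le| exact: Tm_le].
Qed.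

Definition ee (r : nat) (eta : bool) := if eta then r.+1 else 0.

Lemma Fm_box v : exists k eta, [/\ k < n.+1, (k, eta) <> (i, eps) & nth 0 (Fm v) k = ee p eta].
Proof.
case: (ltnP (delta v) m) => hd.
- have [k hk hD] := delta_lt hd.
  move: hk; rewrite /ks mem_filter mem_iota => /andP [hki hkn].
  have hkn' : k < n.+1 by lia.
  case: (ltnP (nth 0 v k) m) => hx.
  + exists k, false; split => //; first by case=> e; move: hki; rewrite e eqxx.
    by rewrite nth_Fm hkn' (negbTE hki) /Tm /ee; lia.
  + exists k, true; split => //; first by case=> e; move: hki; rewrite e eqxx.
    by rewrite nth_Fm hkn' (negbTE hki) /Tm /ee; move: hD; rewrite /Dm /Cq; lia.
- exists i, (~~ eps); split => //; first by case; case: eps.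
  rewrite nth_Fm Hi eqxx /sfun /ee; case: eps => /=.
  + have -> : m - delta v = 0 by lia. by rewrite minn0.
  + have -> : m - delta v = 0 by lia. have := Tm_le (nth 0 v i); lia.
Qed.

Lemma TT_Tm x : x <= Cq -> TT p (m + m) x = Tm x.
Proof. move=> h; rewrite TT_closed ?A_even //; rewrite /Cq in h; lia. Qed.

Lemma sfun_face j eta u : j < n.+1 -> (j, eta) <> (i, eps) -> size u = n ->
  sfun (ins j (ee (p + (m + m)) eta) u) = Tm (nth 0 (ins j (ee (p + (m + m)) eta) u) i).
Proof.
move=> hj hne hu.
have hju : j <= size u by rewrite hu; lia.
case: (eqVneq j i) => [ej|nji].
- subst j; rewrite /sfun nth_ins // ltnn eqxx /Tm /ee.
  move: hne; case: eps; case: (eta) => //= _; lia.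
- have hks : j \in ks by rewrite /ks mem_filter nji mem_iota; lia.
  have hd := delta_le (ins j (ee (p + (m + m)) eta) u) hks.
  set X := ins j (ee (p + (m + m)) eta) u in hd *.
  rewrite /X nth_ins // ltnn eqxx /Dm /ee /Cq -/X in hd.
  have hd0 : delta X = 0 by move: hd; case: (eta); lia.
  rewrite /sfun hd0; have := Tm_le (nth 0 X i).
  case: eps; lia.
Qed.

Lemma Fm_face j eta u : j < n.+1 -> (j, eta) <> (i, eps) -> size u = n ->
  Fm (ins j (ee (p + (m + m)) eta) u) = ins j (ee p eta) (map Tm u).
Proof.
move=> hj hne hu.
have hTe : Tm (ee (p + (m+m)) eta) = ee p eta by rewrite /Tm /ee; case: (eta); lia.
apply: seq_eqP; first by rewrite size_Fm size_ins size_map hu.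
move=> l; rewrite nth_Fm -hTe -map_ins.
case: (ltnP l n.+1) => hl.
- rewrite (nth_map 0) ?size_ins ?hu //.
  case: eqP => [->|_] //; exact: sfun_face.
- by rewrite nth_default // size_map size_ins hu.
Qed.
Lemma par_q : odd ((p + (m + m))./2 + m) = odd p./2.
Proof. by have := A_par p (m + m); rewrite A_even. Qed.

Lemma par_helper x f0 f1 :
  f0 = f1 \/ ((f1 = f0.+1 \/ f0 = f1.+1) /\ odd f0 = odd (x + m)) ->
  odd x = odd (p + (m + m))./2 ->
  f0 = f1 \/ ((f1 = f0.+1 \/ f0 = f1.+1) /\ odd f0 = odd p./2).
Proof.
move=> [->|[h1 h2]] hx; first by left.
by right; split => //; rewrite h2 oddD hx -par_q oddD.
Qed.

Lemma Fm_arrow v w : size v = n.+1 -> size w = n.+1 ->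
  box_arr (stage_sign (p + (m + m))) n.+1 v w -> box_arr (stage_sign p) n.+1 (Fm v) (Fm w).
Proof.
move=> hv hw; case=> [->|[j [hj [ho hI]]]]; first by left.
move/Iarr_sP: hI => [heq|[hs hpar]].
  left; congr Fm; apply: seq_eqP; first by rewrite hv hw.
  by move=> l; case: (eqVneq l j) => [->|hl]; [exact: heq| exact: ho].
have E : Edge j v w by split; [rewrite hv hw| split].
rewrite /stage_sign negbK in hpar.
have hq := par_q.
case: (eqVneq j i) => [eji|nji].
- subst j; right; exists i; split => //; split.
  + move=> l hl; rewrite !nth_Fm; case: ifP => // _; rewrite (negbTE hl) ho //.
  + apply/Iarr_sP; rewrite !nth_Fm Hi eqxx /stage_sign negbK.
    exact: (par_helper (Good_s E) hpar).
- case: (Tm (nth 0 v j) =P Tm (nth 0 w j)) => hT.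
  + right; exists i; split => //; split.
    * move=> l hl; rewrite !nth_Fm; case: ifP => // _; rewrite (negbTE hl).
      by case: (eqVneq l j) => [->|hlj]; [exact: hT| rewrite ho].
    * apply/Iarr_sP; rewrite !nth_Fm Hi eqxx /stage_sign negbK.
      exact: (par_helper (Good_s E) hpar).
  + have hD : m <= Dm (nth 0 v j) /\ m <= Dm (nth 0 w j).
      by move: hT; rewrite /Tm /Dm /Cq; clear -hs Hm; lia.
    have hs' : sfun v = sfun w.
    { rewrite /sfun (ho i); last by rewrite eq_sym.
      by rewrite (delta_stable E hD.1 hD.2). }
    right; exists j; split => //; split.
    * move=> l hl; rewrite !nth_Fm; case: ifP => // _.
      by case: eqP => [_|_]; [exact: hs'| rewrite ho].
    * apply/Iarr_sP; rewrite !nth_Fm hj (negbTE nji) /stage_sign negbK.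
      exact: (par_helper (Good_T j E) hpar).
Qed.
End Filler.
Lemma TT_comp' r s p x : r <= s -> s <= p ->
  TT r (p - r) x = TT r (s - r) (TT s (p - s) x).
Proof.
move=> h1 h2; have -> : p - r = (s - r) + (p - s) by lia.
rewrite TT_comp; congr (TT _ _ (TT _ _ _)); lia.
Qed.

Lemma TT_ee r p eta : r <= p -> TT r (p - r) (ee p eta) = ee r eta.
Proof.
move=> h; case: eta => /=; last exact: TT0.
have := TTtop r (p - r); have -> : r + (p - r) = p by lia. by [].
Qed.

Lemma vertex_map_TT r p n v : r <= p -> is_vertex p.+1 n v ->
  is_vertex r.+1 n (map (TT r (p - r)) v).
Proof.
move=> h /is_vertexP [hs hv]; apply/is_vertexP; split; first by rewrite size_map.
move=> j; case: (ltnP j (size v)) => hj.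
- rewrite (nth_map 0) //; apply: TT_le; have := hv j; lia.
- by rewrite nth_default // size_map.
Qed.

Lemma clamp_step A P x y : (y = x.+1 \/ x = y.+1) ->
  minn (x - A) P = minn (y - A) P \/
  ((minn (y - A) P = (minn (x - A) P).+1 \/ minn (x - A) P = (minn (y - A) P).+1) /\
   minn (x - A) P = x - A /\ A <= x).
Proof. lia. Qed.

Lemma TT_box r p n v w : r <= p -> is_vertex p.+1 n v -> is_vertex p.+1 n w ->
  box_arr (stage_sign p) n v w ->
  box_arr (stage_sign r) n (map (TT r (p - r)) v) (map (TT r (p - r)) w).
Proof.
move=> h /is_vertexP [hsv hv] /is_vertexP [hsw hw].
case=> [->|[j [hj [ho hI]]]]; first by left.
right; exists j; split => //; split.
- move=> l hl; case: (ltnP l n) => hln.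
  + by rewrite !(nth_map 0) ?hsv ?hsw // ho.
  + by rewrite !nth_default // size_map ?hsv ?hsw.
- rewrite !(nth_map 0) ?hsv ?hsw //.
  have hx := hv j; have hy := hw j.
  have hpar := A_par r (p - r).
  have e : r + (p - r) = p by lia.
  rewrite e in hpar.
  have hA := A_le r (p - r).
  rewrite !TT_closed; try lia.
  move/Iarr_sP: hI => hI; apply/Iarr_sP; move: hI hpar.
  rewrite /stage_sign !negbK.
  move: (nth 0 v j) (nth 0 w j) hx hy hA => x y hx hy hA.
  case=> [->|[hxy hox]] hpar; first by left.
  have [h0|[hc [he hAx]]] := clamp_step (A r (p - r)) r.+1 hxy; first by left.
  by right; split => //; rewrite he oddB // hox -hpar oddD.
Qed.

Lemma bound_nat (Q : nat -> nat -> Prop) N :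
  (forall x, x < N -> exists p0, forall p, p0 <= p -> Q x p) ->
  exists p0, forall x, x < N -> forall p, p0 <= p -> Q x p.
Proof.
elim: N => [|N IH] H; first by exists 0.
have [p1 H1] := IH (fun x hx => H x (ltnW hx)).
have [p2 H2] := H N (ltnSn N).
exists (maxn p1 p2) => x hx p hp.
case: (ltnP x N) => h; first by apply: H1 => //; lia.
have -> : x = N by lia. apply: H2; lia.
Qed.

Lemma bound_bool (Q : bool -> nat -> Prop) :
  (forall e, exists p0, forall p, p0 <= p -> Q e p) ->
  exists p0, forall e p, p0 <= p -> Q e p.
Proof.
move=> H; have [p1 H1] := H true; have [p2 H2] := H false.
exists (maxn p1 p2) => e p hp; case: e; [apply: H1|apply: H2]; lia.
Qed.

Definition beta (G : digraph) (b : nat -> bool -> rep G) (p j : nat) (eta : bool) (v : seq nat) : G :=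
  rmap (b j eta) (map (TT (rstage (b j eta)) (p - rstage (b j eta))) v).

Lemma beta_valid (G : digraph) (b : nat -> bool -> rep G) p n j eta :
  rstage (b j eta) <= p -> valid n (b j eta) -> is_cube p n (beta b p j eta).
Proof.
move=> hr hv v w hv' hw' ha; apply: hv.
- exact: vertex_map_TT.
- exact: vertex_map_TT.
- exact: TT_box.
Qed.

Lemma transfer (G : digraph) (b : nat -> bool -> rep G) n j j' eta eta' :
  ceq n.-1 (face j eta (b j' eta')) (face j'.-1 eta' (b j eta)) ->
  exists p0, forall p, p0 <= p -> forall u, is_vertex p.+1 n.-1 u ->
    beta b p j' eta' (ins j (ee p eta) u) = beta b p j eta (ins j'.-1 (ee p eta') u).
Proof.
move=> [s [h1 [h2 H]]]; rewrite /= in h1 h2; exists s => p' hp u hu.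
rewrite /beta !map_ins !TT_ee; try lia.
have := H (map (TT s (p' - s)) u) (vertex_map_TT hp hu).
rewrite /face /= -!map_comp.
have e1 : forall r, r <= s -> map (TT r (p' - r)) u = map (TT r (s - r) \o TT s (p' - s)) u.
  by move=> r hr; apply: eq_map => x /=; apply: TT_comp'; lia.
rewrite -e1 // -e1 //.
Qed.
Ltac seqcase w := repeat (case: ifP => ?); try lia; try (congr (nth 0 w); lia).
Lemma del_ins k e u : k <= size u -> del k (ins k e u) = u.
Proof.
move=> h; apply: seq_eqP.
  rewrite size_del; last by rewrite size_ins; lia.
  by rewrite size_ins.
move=> l; rewrite nth_del; last by rewrite size_ins; lia.
rewrite !nth_ins //; seqcase u.
Qed.


Lemma ins_dd1 w k k' : k < k' -> k' < size w ->
  ins k (nth 0 w k) (del k (del k' w)) = del k' w.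
Proof.
move=> h1 h2; apply: seq_eqP.
  rewrite size_ins !size_del ?size_del; lia.
move=> l; rewrite nth_ins; last by rewrite !size_del ?size_del; lia.
rewrite !nth_del ?size_del; try lia.
seqcase w.
Qed.

Lemma ins_dd2 w k k' : k < k' -> k' < size w ->
  ins k'.-1 (nth 0 w k') (del k (del k' w)) = del k w.
Proof.
move=> h1 h2; apply: seq_eqP.
  rewrite size_ins !size_del ?size_del; lia.
move=> l; rewrite nth_ins; last by rewrite !size_del ?size_del; lia.
rewrite !nth_del ?size_del; try lia.
seqcase w.
Qed.

Lemma del_box s N x y k : size x = N.+1 -> size y = N.+1 -> k < N.+1 ->
  nth 0 x k = nth 0 y k -> box_arr s N.+1 x y -> box_arr s N (del k x) (del k y).
Proof.
move=> hx hy hk hxy; case=> [->|[j [hj [ho hI]]]]; first by left.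
case: (eqVneq j k) => [ejk|njk].
  left; congr del; apply: seq_eqP; first by rewrite hx hy.
  by move=> l; case: (eqVneq l k) => [->|hl]; [exact: hxy| apply: ho; rewrite ejk].
right; exists (if j < k then j else j.-1); split; first by case: ifP; lia.
split.
- move=> l hl; rewrite !nth_del ?hx ?hy //.
  case: ifP => h; apply: ho; move: hl; case: ifP; lia.
- rewrite !nth_del ?hx ?hy //; case: (ltnP j k) => h.
  + by rewrite !h.
  + have -> : (j.-1 < k) = false by lia.
    by have -> : j.-1.+1 = j by lia.
Qed.

Lemma vertex_del p N k w : k < N.+1 -> is_vertex p N.+1 w -> is_vertex p N (del k w).
Proof.
move=> hk /is_vertexP [hs hw]; apply/is_vertexP; split.
  by rewrite size_del hs.
by move=> j; rewrite nth_del ?hs //; case: ifP.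
Qed.

Definition gb (i : nat) (eps : bool) k (eta : bool) := ~~ ((k == i) && (eta == eps)).

Lemma gbP i eps k eta : reflect ((k, eta) <> (i, eps)) (gb i eps k eta).
Proof.
rewrite /gb; apply: (iffP idP).
- by move=> h [e1 e2]; subst; rewrite !eqxx in h.
- by move=> h; apply/negP => /andP [/eqP e1 /eqP e2]; apply: h; subst.
Qed.

Section Main.
Variables (G : digraph) (n i : nat) (eps : bool) (b : nat -> bool -> rep G) (p : nat).
Hypothesis Hi : i < n.+1.
Hypothesis Hp : odd p.
Hypothesis Hstage : forall j eta, j < n.+1 -> rstage (b j eta) <= p.
Hypothesis Hval : forall j eta, j < n.+1 -> (j, eta) <> (i, eps) -> valid n (b j eta).
Hypothesis HCL : forall j j' eta eta', j < j' -> j' < n.+1 -> (j, eta) <> (i, eps) ->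
  (j', eta') <> (i, eps) -> forall u, is_vertex p.+1 n.-1 u ->
  beta b p j' eta' (ins j (ee p eta) u) = beta b p j eta (ins j'.-1 (ee p eta') u).

Fixpoint fgr (w : seq nat) (l : seq nat) : nat * bool :=
  match l with
  | [::] => (i, ~~ eps)
  | k :: l' => if gb i eps k false && (nth 0 w k == 0) then (k, false)
               else if gb i eps k true && (nth 0 w k == p.+1) then (k, true)
               else fgr w l'
  end.

Definition isface (w : seq nat) k eta :=
  [/\ k < n.+1, (k, eta) <> (i, eps) & nth 0 w k = ee p eta].

Lemma fgr_spec w l : all (fun k => k < n.+1) l ->
  (exists k eta, k \in l /\ isface w k eta) -> isface w (fgr w l).1 (fgr w l).2.
Proof.
elim: l => [|k l IH] /=; first by move=> _ [? [? []]].
move=> /andP [hk hl] [k0 [eta0 [hk0 hf]]].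
case: ifP => h1.
  by move/andP: h1 => [/gbP g /eqP e]; split.
case: ifP => h2.
  by move/andP: h2 => [/gbP g /eqP e]; split.
apply: IH => //; exists k0, eta0; split => //.
move: hk0; rewrite inE => /orP [/eqP e|] //; subst k0.
case: hf => _ /gbP g; case: eta0 g => g /= e.
- by rewrite g e eqxx in h2.
- by rewrite g e eqxx in h1.
Qed.

Definition Bf (w : seq nat) : G :=
  let ke := fgr w (iota 0 n.+1) in beta b p ke.1 ke.2 (del ke.1 w).

Lemma faces_agree_lt w k eta k' eta' : size w = n.+1 -> (forall j, nth 0 w j <= p.+1) ->
  k < k' -> isface w k eta -> isface w k' eta' ->
  beta b p k eta (del k w) = beta b p k' eta' (del k' w).
Proof.
move=> hs hw hkk [hk g e] [hk' g' e'].
have hu : is_vertex p.+1 n.-1 (del k (del k' w)).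
  apply/is_vertexP; split; first by rewrite !size_del ?size_del ?hs; lia.
  by move=> j; rewrite !nth_del ?size_del ?hs; try lia; repeat case: ifP => _.
have := HCL hkk hk' g g' hu.
by rewrite -e -e' ins_dd1 ?hs // ins_dd2 ?hs.
Qed.

Lemma faces_agree w k eta k' eta' : size w = n.+1 -> (forall j, nth 0 w j <= p.+1) ->
  isface w k eta -> isface w k' eta' ->
  beta b p k eta (del k w) = beta b p k' eta' (del k' w).
Proof.
move=> hs hw f f'; case: (ltngtP k k') => h.
- exact: faces_agree_lt.
- by symmetry; apply: faces_agree_lt.
- subst k'; case: f => _ _ e; case: f' => _ _ e'.
  have -> : eta' = eta by move: e e'; rewrite /ee; case: eta; case: eta' => //=; lia.
  by [].
Qed.

Lemma Bf_face w k eta : is_vertex p.+1 n.+1 w -> isface w k eta -> Bf w = beta b p k eta (del k w).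
Proof.
move=> /is_vertexP [hs hw] f; rewrite /Bf.
have H : isface w (fgr w (iota 0 n.+1)).1 (fgr w (iota 0 n.+1)).2.
  apply: fgr_spec.
    by apply/allP => x; rewrite mem_iota; lia.
  by exists k, eta; split => //; case: f => hk _ _; rewrite mem_iota; lia.
exact: (faces_agree hs hw H f).
Qed.

Lemma common_face s x y k eta k' eta' : size x = n.+1 -> size y = n.+1 ->
  isface x k eta -> isface y k' eta' -> box_arr s n.+1 x y ->
  exists k0 eta0, isface x k0 eta0 /\ isface y k0 eta0.
Proof.
move=> hx hy f f'; case=> [<-|[j [hj [ho hI]]]]; first by exists k, eta.
case: (eqVneq k j) => [ekj|nkj]; last first.
  exists k, eta; split => //; case: f => h1 h2 h3; split => //; rewrite -ho //.
case: (eqVneq k' j) => [ekj'|nkj']; last first.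
  exists k', eta'; split => //; case: f' => h1 h2 h3; split => //; rewrite ho //.
subst k k'; case: f => h1 h2 h3; case: f' => h1' h2' h3'.
move/Iarr_sP: hI => [e|[hs _]].
  by exists j, eta; split => //; split => //; rewrite -e.
exfalso; move: hs; rewrite h3 h3' /ee.
have hp1 : 0 < p by case: p Hp.
case: (eta); case: (eta'); lia.
Qed.

Definition mm := p.+1.
Definition qq := p + (mm + mm).

Lemma hmm : p < mm. Proof. by rewrite /mm. Qed.

Definition cfill : rep G := Rep qq (fun v => Bf (Fm n i eps p mm v)).

Lemma isface_Fm v : exists k eta, isface (Fm n i eps p mm v) k eta.
Proof. have [k [eta [h1 h2 h3]]] := Fm_box eps Hp hmm Hi v; by exists k, eta; split. Qed.

Lemma cfill_valid : valid n.+1 cfill.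
Proof.
move=> v w /is_vertexP [hv _] /is_vertexP [hw _] ha /=.
have ha' := Fm_arrow eps Hp hmm Hi hv hw ha.
have [k [eta f]] := isface_Fm v.
have [k' [eta' f']] := isface_Fm w.
have [k0 [eta0 [g g']]] := common_face (size_Fm n i eps p mm v) (size_Fm n i eps p mm w) f f' ha'.
rewrite (Bf_face (Fm_vertex eps Hp hmm Hi v) g) (Bf_face (Fm_vertex eps Hp hmm Hi w) g').
case: (g) => hk hne _.
apply: (beta_valid (Hstage eta0 hk) (Hval hk hne)).
- exact: (vertex_del hk (Fm_vertex eps Hp hmm Hi v)).
- exact: (vertex_del hk (Fm_vertex eps Hp hmm Hi w)).
- apply: del_box => //; try exact: size_Fm.
  by case: g => _ _ ->; case: g' => _ _ ->.
Qed.

Lemma cfill_faces j eta : j < n.+1 -> (j, eta) <> (i, eps) -> ceq n (face j eta cfill) (b j eta).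
Proof.
move=> hj hne; exists qq; split => //=; split.
  have := Hstage eta hj; rewrite /qq; lia.
move=> v /is_vertexP [hv hvb].
rewrite subnn.
have -> : map (TT qq 0) v = v by rewrite map_id_in.
have := Fm_face Hp hmm Hi hj hne hv.
rewrite /ee /qq => ->.
rewrite (Bf_face (w := ins j (ee p eta) (map (Tm p mm) v)) (k := j) (eta := eta)).
- rewrite del_ins ?size_map ?hv; last lia.
  rewrite /beta -map_comp; congr rmap; apply/eq_in_map => x hx /=.
  have hr := Hstage eta hj.
  rewrite (@TT_comp' _ p qq x hr); last by rewrite /qq; lia.
  have -> : qq - p = mm + mm by rewrite /qq; lia.
  rewrite (TT_Tm (n:=n) (i:=i) Hp hmm Hi) //.
  have := hvb (index x v); rewrite nth_index // /qq /Cq /mm; lia.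
- rewrite -(Fm_face Hp hmm Hi hj hne hv); exact: Fm_vertex.
- split => //; rewrite nth_ins ?size_map ?hv ?ltnn ?eqxx //; lia.
Qed.
End Main.
Lemma bound_nat' (Q : nat -> nat -> Prop) N :
  (forall x, x < N -> exists p0, forall p, p0 <= p -> Q x p) ->
  exists p0, forall p, p0 <= p -> forall x, x < N -> Q x p.
Proof. move=> H; have [p0 Hp0] := bound_nat H; exists p0 => p hp x hx; exact: Hp0. Qed.

Lemma bound_bool' (Q : bool -> nat -> Prop) :
  (forall e, exists p0, forall p, p0 <= p -> Q e p) ->
  exists p0, forall p, p0 <= p -> forall e, Q e p.
Proof. move=> H; have [p0 Hp0] := bound_bool H; exists p0 => p hp e; exact: Hp0. Qed.

Theorem mainTheorem3 : forall G : digraph, Ninfty_Kan G.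
Proof.
move=> G; rewrite /Ninfty_Kan => n i eps b Hi Hval Hcomp.
have [p1 H1] : exists p0, forall j, j < n.+1 -> forall p, p0 <= p ->
    forall eta, rstage (b j eta) <= p.
  apply: (@bound_nat (fun j p => forall eta, rstage (b j eta) <= p)) => j _.
  by exists (maxn (rstage (b j true)) (rstage (b j false))) => p hp eta; case: eta; lia.
pose CL p j j' eta eta' := j < j' -> (j, eta) <> (i, eps) -> (j', eta') <> (i, eps) ->
  forall u, is_vertex p.+1 n.-1 u ->
  beta b p j' eta' (ins j (ee p eta) u) = beta b p j eta (ins j'.-1 (ee p eta') u).
have [p2 H2] : exists p0, forall p, p0 <= p -> forall j, j < n.+1 ->
    forall j', j' < n.+1 -> forall eta eta', CL p j j' eta eta'.
  apply: (@bound_nat' (fun j p => forall j', j' < n.+1 -> forall eta eta', CL p j j' eta eta')).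
  move=> j hj.
  apply: (@bound_nat' (fun j' p => forall eta eta', CL p j j' eta eta')) => j' hj'.
  apply: (@bound_bool' (fun eta p => forall eta', CL p j j' eta eta')) => eta.
  apply: (@bound_bool' (fun eta' p => CL p j j' eta eta')) => eta'.
  case: (ltnP j j') => hjj'; last first.
    by exists 0 => p _ h; exfalso; lia.
  case: (eqVneq (j, eta) (i, eps)) => [e|ne].
    by exists 0 => p _ _ h; exfalso; apply: h.
  case: (eqVneq (j', eta') (i, eps)) => [e'|ne'].
    by exists 0 => p _ _ _ h; exfalso; apply: h.
  have [p0 Hp0] := transfer (Hcomp j j' eta eta' hjj' hj' (elimN eqP ne) (elimN eqP ne')).
  by exists p0 => p hp _ _ _; apply: Hp0.
pose p := (maxn p1 p2).*2.+1.
have Hp : odd p by rewrite /p /= odd_double.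
have Hstage : forall j eta, j < n.+1 -> rstage (b j eta) <= p.
  by move=> j eta hj; apply: H1 => //; rewrite /p; lia.
have HCL : forall j j' eta eta', j < j' -> j' < n.+1 -> (j, eta) <> (i, eps) ->
  (j', eta') <> (i, eps) -> forall u, is_vertex p.+1 n.-1 u ->
  beta b p j' eta' (ins j (ee p eta) u) = beta b p j eta (ins j'.-1 (ee p eta') u).
  move=> j j' eta eta' h1 h2 h3 h4; apply: (H2 p) => //; rewrite /p; lia.
exists (cfill n i eps b p); split.
- exact: (cfill_valid Hi Hp Hstage Hval HCL).
- move=> j eta hj hne; exact: (cfill_faces Hi Hp Hstage HCL hj hne).
Qed.
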